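(* Under the standing assumptions of the context, for any real $a<b$, $\|\widehat{\varphi_l}\,'-\widehat{\varphi^M}\,'\|_{C[a,b]}=O(\mu(l))$ as $l\to\infty$, where $'$ denotes differentiation in $\omega$ and $\|\cdot\|_{C[a,b]}$ is the sup norm on $[a,b]$.
   Context: Fourier transform: $\widehat f(\omega)=\int_{\mathbb{R}}f(t)e^{-it\omega}\,dt$. Let $\theta$ be odd, non-decreasing, $C^2$, with $\theta(\omega)=\pi/4$ for $\omega>\pi/3$; fix $\pi/3\le\omega_0<\pi/2$. Meyer scaling function: $\widehat{\varphi^M}(\omega)=1$ for $|\omega|\le2\omega_0$, $=\cos(\frac\pi4+\theta(\frac{\pi}{3(\pi-2\omega_0)}(|\omega|-\pi)))$ for $2\omega_0<|\omega|\le2\pi-2\omega_0$, $=0$ otherwise. Meyer mask: $2\pi$-periodic $m^M$ with $m^M(\omega)=\widehat{\varphi^M}(2\omega)$ on $[-\pi,\pi]$. $\|\cdot\|_C$: sup norm on $[-\pi,\pi]$. A linear method of summation $(\lambda_{n,k})$ maps $f$ with Fourier coefficients $a_k,b_k$ to $u_n(f,\omega)=\frac{a_0}2+\sum_{k=1}^n\lambda_{n,k}(a_k\cos k\omega+b_k\sin k\omega)$. $m^M_l:=m^M/(\cos\frac\omega2)^{2l}$. Standing assumptions: a method and a sequence $n(l)$ are fixed with $u_l:=u_{n(l)}(m^M_l,\cdot)$, $u_{1,l}:=u_{n(l)}((m^M_l)',\cdot)$ satisfying $\alpha(l):=\|u_l-m^M_l\|_C=o(l^{-1})$, $\gamma(l):=\|u_{1,l}-(m^M_l)'\|_C=o(1)$,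 $u_l(\pi)\ne0$; $l_0$ is fixed with $\inf_{l\ge l_0}|u_l(0)|>0$ and $l\ge l_0$. $\mu(l):=l\alpha(l)+\gamma(l)$. $m_l(\omega):=(\cos\frac\omega2)^{2l}u_l(\omega)/u_l(0)$, $\widehat{\varphi_l}(\omega):=\prod_{j\ge1}m_l(\omega2^{-j})$. *)

(* Defs.v *)
From Stdlib Require Import Reals Lra.
From Coquelicot Require Import Coquelicot.
Open Scope R_scope.

Definition phiM (theta : R -> R) (w0 : R) (w : R) : R :=
  if Rle_dec (Rabs w) (2 * w0) then 1
  else if Rle_dec (Rabs w) (2 * PI - 2 * w0) then
    cos (PI / 4 + theta (PI / (3 * (PI - 2 * w0)) * (Rabs w - PI)))
  else 0.

(* reduction of w to [-pi, pi) modulo 2 pi *)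
Definition red2pi (w : R) : R :=
  w - 2 * PI * IZR (up ((w - PI) / (2 * PI))).

(* Meyer mask: the 2pi-periodic function equal to phiM(2w) on [-pi,pi). *)
Definition mM (theta : R -> R) (w0 : R) (w : R) : R :=
  phiM theta w0 (2 * red2pi w).

Definition mMl (theta : R -> R) (w0 : R) (l : nat) (w : R) : R :=
  mM theta w0 w / (cos (w / 2)) ^ (2 * l).

Definition fourier_a (f : R -> R) (k : nat) : R :=
  / PI * RInt (fun t => f t * cos (INR k * t)) (- PI) PI.
Definition fourier_b (f : R -> R) (k : nat) : R :=
  / PI * RInt (fun t => f t * sin (INR k * t)) (- PI) PI.

Fixpoint sum1 (g : nat -> R) (n : nat) : R :=
  match n with O => 0 | S m => sum1 g m + g (S m) end.

Fixpoint prod1 (g : nat -> R) (n : nat) : R :=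
  match n with O => 1 | S m => prod1 g m * g (S m) end.

(* linear method of summation (lambda_{n,k}) applied to f *)
Definition usum (lam : nat -> nat -> R) (n : nat) (f : R -> R) (w : R) : R :=
  fourier_a f 0 / 2 +
  sum1 (fun k => lam n k * (fourier_a f k * cos (INR k * w)
                            + fourier_b f k * sin (INR k * w))) n.

Definition supnorm (a b : R) (f : R -> R) : R :=
  real (Lub_Rbar (fun y => exists x, a <= x <= b /\ y = Rabs (f x))).

Section Std.
Variables (theta : R -> R) (w0 : R) (lam : nat -> nat -> R) (nl : nat -> nat).

Definition u_l (l : nat) : R -> R := usum lam (nl l) (mMl theta w0 l).
Definition u1_l (l : nat) : R -> R :=
  usum lam (nl l) (Derive (mMl theta w0 l)).
Definition alpha (l : nat) : R :=
  supnorm (- PI) PI (fun w => u_l l w - mMl theta w0 l w).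
Definition gamma (l : nat) : R :=
  supnorm (- PI) PI (fun w => u1_l l w - Derive (mMl theta w0 l) w).
Definition mu (l : nat) : R := INR l * alpha l + gamma l.
Definition m_l (l : nat) (w : R) : R :=
  (cos (w / 2)) ^ (2 * l) * u_l l w / u_l l 0.
(* infinite product prod_{j>=1} m_l(w 2^{-j}) as limit of partial products *)
Definition phi_l (l : nat) (w : R) : R :=
  real (Lim_seq (fun N => prod1 (fun j => m_l l (w / 2 ^ j)) N)).
End Std.

(* Main.v *)
Require Import Defs.
From Stdlib Require Import Reals.
From Coquelicot Require Import Coquelicot.
From Stdlib Require Import Lra Lia ZArith.
Open Scope R_scope.

Definition Pn (f : R -> R) (N : nat) (w : R) : R := prod1 (fun j => f (w / 2 ^ j)) N.
Fixpoint dPn (f f' : R -> R) (N : nat) (w : R) : R :=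
  match N with
  | O => 0
  | S m => dPn f f' m w * f (w / 2 ^ S m) + Pn f m w * (f' (w / 2 ^ S m) / 2 ^ S m)
  end.

Lemma pow2_pos (j : nat) : 0 < 2 ^ j.
Proof. apply pow_lt; lra. Qed.

Lemma is_derive_scale (f f' : R -> R) (k : nat) (w : R) :
  (forall x, is_derive f x (f' x)) ->
  is_derive (fun w => f (w / 2 ^ k)) w (f' (w / 2 ^ k) / 2 ^ k).
Proof.
  intros Hf.
  assert (H2 := pow2_pos k).
  eapply is_derive_ext.
  { intros t. reflexivity. }
  replace (f' (w / 2 ^ k) / 2 ^ k) with (scal (/ 2 ^ k) (f' (w / 2 ^ k))).
  2:{ unfold scal; simpl; unfold mult; simpl; field; lra. }
  apply (is_derive_comp f (fun w => w / 2 ^ k)).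
  apply Hf.
  auto_derive. auto. ring.
Qed.

Lemma is_derive_Pn f f' N w :
  (forall x, is_derive f x (f' x)) -> is_derive (Pn f N) w (dPn f f' N w).
Proof.
  intros Hf. induction N as [|N IH].
  - simpl. unfold Pn; simpl. auto_derive; auto.
  - simpl. unfold Pn at 1. simpl.
    eapply is_derive_ext. { intros t. reflexivity. }
      assert (H := is_derive_mult (Pn f N) (fun w => f (w / 2 ^ S N)) w _ _ IH
                 (is_derive_scale f f' (S N) w Hf) ltac:(intros; apply Rmult_comm)).
    simpl in H. unfold plus, mult in H; simpl in H.
    eapply is_derive_ext. 2: exact H.
    intros t. reflexivity.
Qed.

Lemma near1 (f f' : R -> R) B x :
  (forall x, is_derive f x (f' x)) -> (forall x, Rabs (f' x) <= B) ->
  Rabs (f x - f 0) <= B * Rabs x.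
Proof.
  intros Hd Hb.
  replace (Rabs x) with (Rabs (x - 0)) by (f_equal; ring).
  apply (bounded_variation f f'). intros t _. split; auto.
Qed.

Lemma locally_abs_lt (w T : R) : Rabs w < T -> locally w (fun y => Rabs y < T).
Proof.
  intros H. assert (Hp : 0 < T - Rabs w) by lra.
  exists (mkposreal _ Hp). intros y Hy. simpl in Hy.
  unfold ball in Hy; simpl in Hy; unfold AbsRing_ball, abs, minus, plus, opp in Hy; simpl in Hy.
  assert (Rabs y <= Rabs (y + - w) + Rabs w).
  { replace y with ((y + - w) + w) at 1 by ring. apply Rabs_triang. }
  lra.
Qed.

Definition Pi (c : R) (N : nat) : R := prod1 (fun j => 1 + c / 2 ^ j) N.

Lemma Pi_ge1 c N : 0 <= c -> 1 <= Pi c N.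
Proof.
  intros Hc. induction N. unfold Pi; simpl. lra.
  assert (0 <= c / 2 ^ S N) by (apply Rdiv_le_0_compat; [lra| apply pow2_pos]).
  unfold Pi in *. change (prod1 (fun j => 1 + c / 2 ^ j) (S N)) with
    (prod1 (fun j => 1 + c / 2 ^ j) N * (1 + c / 2 ^ S N)). nra.
Qed.

Lemma Pi_mono c N : 0 <= c -> Pi c N <= Pi c (S N).
Proof.
  intros Hc. assert (H1 := Pi_ge1 c N Hc).
  assert (0 <= c / 2 ^ S N) by (apply Rdiv_le_0_compat; [lra| apply pow2_pos]).
  unfold Pi in *. change (prod1 (fun j => 1 + c / 2 ^ j) (S N)) with
    (prod1 (fun j => 1 + c / 2 ^ j) N * (1 + c / 2 ^ S N)). nra.
Qed.

Lemma inv2S N : / 2 ^ S N = / 2 ^ N / 2.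
Proof. simpl. assert (H := pow2_pos N). field. lra. Qed.

Lemma Pi_le_exp c N : 0 <= c -> Pi c N <= exp (c * (1 - / 2 ^ N)).
Proof.
  intros Hc. induction N.
  - simpl. unfold Pi; simpl. replace (c * (1 - / 1)) with 0 by field. rewrite exp_0. lra.
  - unfold Pi in *. change (prod1 (fun j => 1 + c / 2 ^ j) (S N)) with
    (prod1 (fun j => 1 + c / 2 ^ j) N * (1 + c / 2 ^ S N)).
    replace (c * (1 - / 2 ^ S N)) with (c * (1 - / 2 ^ N) + c / 2 ^ S N).
    2:{ unfold Rdiv. rewrite inv2S. set (a := / 2 ^ N). field. }
    rewrite exp_plus.
    assert (H1 := exp_ineq1_le (c / 2 ^ S N)).
    assert (0 <= c / 2 ^ S N) by (apply Rdiv_le_0_compat; [lra| apply pow2_pos]).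
    assert (H3 := Pi_ge1 c N Hc). unfold Pi in H3.
    apply Rmult_le_compat; lra.
Qed.

Lemma Pi_le_E c N : 0 <= c -> Pi c N <= exp c.
Proof.
  intros Hc. eapply Rle_trans. apply Pi_le_exp; auto.
  assert (H := Rinv_0_lt_compat _ (pow2_pos N)).
  destruct (Req_dec c 0) as [->|Hc0].
  - right. f_equal. ring.
  - left. apply exp_increasing. nra.
Qed.

Lemma exp_le_mono x y : x <= y -> exp x <= exp y.
Proof. intros [H|H]. left; apply exp_increasing; auto. right; subst; auto. Qed.

Lemma abs_div2 w k : Rabs (w / 2 ^ k) = Rabs w / 2 ^ k.
Proof.
  unfold Rdiv. rewrite Rabs_mult, Rabs_inv, (Rabs_pos_eq (2 ^ k)); auto.
  left; apply pow2_pos.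
Qed.

Lemma Pi_S c N : Pi c (S N) = Pi c N * (1 + c / 2 ^ S N).
Proof. reflexivity. Qed.

Lemma rec_bound (X : nat -> R) (c K : R) :
  0 <= c -> 0 <= K -> X 0%nat <= 0 ->
  (forall N, X (S N) <= X N * (1 + c / 2 ^ S N) + K / 2 ^ S N) ->
  forall N, X N <= Pi c N * K * (1 - / 2 ^ N).
Proof.
  intros Hc HK H0 HS N. induction N.
  - simpl. replace (1 - / 1) with 0 by field. lra.
  - eapply Rle_trans. apply HS.
    assert (Hp : 0 < 2 ^ S N) by apply pow2_pos.
    assert (Hq : 0 < 2 ^ N) by apply pow2_pos.
    assert (H1 : 0 <= c / 2 ^ S N) by (apply Rdiv_le_0_compat; lra).
    assert (HPi := Pi_ge1 c N Hc).
    rewrite Pi_S.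
    assert (Ha : / 2 ^ S N = / 2 ^ N / 2) by apply inv2S.
    set (a := / 2 ^ N) in *.
    assert (Ha0 : 0 < a) by (apply Rinv_0_lt_compat; lra).
    assert (X N * (1 + c / 2 ^ S N) <= Pi c N * K * (1 - a) * (1 + c / 2 ^ S N)).
    { apply Rmult_le_compat_r; lra. }
    assert (K / 2 ^ S N <= Pi c N * (1 + c / 2 ^ S N) * K * (a / 2)).
    { replace (K / 2 ^ S N) with (K * (a / 2)) by (rewrite <- Ha; reflexivity).
      assert (0 <= K * (a/2)) by nra.
      assert (1 <= Pi c N * (1 + c / 2 ^ S N)) by nra.
      nra. }
    rewrite Ha. clearbody a.
    replace (Pi c N * (1 + c / 2 ^ S N) * K * (1 - a / 2)) with
      (Pi c N * K * (1 - a) * (1 + c / 2 ^ S N) + Pi c N * (1 + c / 2 ^ S N) * K * (a / 2)) by (field; lra).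
    lra.
Qed.

Lemma rec_bound_E (X : nat -> R) (c K : R) :
  0 <= c -> 0 <= K -> X 0%nat <= 0 ->
  (forall N, X (S N) <= X N * (1 + c / 2 ^ S N) + K / 2 ^ S N) ->
  forall N, X N <= exp c * K.
Proof.
  intros Hc HK H0 HS N. eapply Rle_trans. apply (rec_bound X c K); auto.
  assert (HP := Pi_le_E c N Hc). assert (H1 := Pi_ge1 c N Hc).
  assert (0 < / 2 ^ N) by (apply Rinv_0_lt_compat, pow2_pos).
  assert (/ 2 ^ N <= 1).
  { rewrite <- Rinv_1. apply Rinv_le_contravar. lra. apply pow_R1_Rle. lra. }
  assert (0 <= Pi c N * K) by nra.
  apply Rle_trans with (Pi c N * K). nra. apply Rmult_le_compat_r; lra.
Qed.


Section Prod.
Variables (f f' g g' : R -> R) (B G eps : R).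
Hypothesis Hf : forall x, is_derive f x (f' x).
Hypothesis Hfb : forall x, Rabs (f' x) <= B.
Hypothesis Hf0 : f 0 = 1.
Hypothesis Hg : forall x, is_derive g x (g' x).
Hypothesis Hgb1 : forall x, Rabs (g x) <= 1.
Hypothesis Hgb : forall x, Rabs (g' x) <= G.
Hypothesis Hg0 : g 0 = 1.
Hypothesis Hfg : forall x, Rabs (f' x - g' x) <= eps.
Hypothesis HB : 0 <= B.
Hypothesis HG : 0 <= G.
Hypothesis Heps : 0 <= eps.

Lemma f_near x : Rabs (f x - 1) <= B * Rabs x.
Proof. rewrite <- Hf0. apply (near1 f f'); auto. Qed.

Lemma f_abs x : Rabs (f x) <= 1 + B * Rabs x.
Proof.
  assert (H := f_near x). replace (f x) with ((f x - 1) + 1) by ring.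
  eapply Rle_trans. apply Rabs_triang. rewrite Rabs_R1. lra.
Qed.

Lemma fg_near x : Rabs (f x - g x) <= eps * Rabs x.
Proof.
  replace (f x - g x) with ((fun t => f t - g t) x - (fun t => f t - g t) 0)
    by (simpl; rewrite Hf0, Hg0; ring).
  apply (near1 (fun t => f t - g t) (fun t => f' t - g' t)); auto.
  intros t. apply (is_derive_minus f g t (f' t) (g' t)); auto.
Qed.

Variable w : R.
Let W := Rabs w.
Let c := B * W.
Let E := exp c.

Lemma W_pos : 0 <= W. Proof. apply Rabs_pos. Qed.
Lemma c_pos : 0 <= c. Proof. unfold c. assert (H := W_pos). nra. Qed.
Lemma E_ge1 : 1 <= E.
Proof. unfold E. assert (H := exp_ineq1_le c). assert (H1 := c_pos). lra. Qed.

Lemma absx k : Rabs (w / 2 ^ k) = W / 2 ^ k.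
Proof. apply abs_div2. Qed.

Lemma Pn_S h N y : Pn h (S N) y = Pn h N y * h (y / 2 ^ S N).
Proof. reflexivity. Qed.

Lemma dPn_S h h' N y : dPn h h' (S N) y = dPn h h' N y * h (y / 2 ^ S N) + Pn h N y * (h' (y / 2 ^ S N) / 2 ^ S N).
Proof. reflexivity. Qed.

Lemma f_absS N : Rabs (f (w / 2 ^ S N)) <= 1 + c / 2 ^ S N.
Proof.
  eapply Rle_trans. apply f_abs. rewrite absx. unfold c, Rdiv. lra.
Qed.

Lemma P_bound N : Rabs (Pn f N w) <= Pi c N.
Proof.
  induction N.
  - unfold Pn, Pi; simpl. rewrite Rabs_R1. lra.
  - rewrite Pn_S, Pi_S, Rabs_mult.
    apply Rmult_le_compat; auto using Rabs_pos, f_absS.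
Qed.

Lemma P_boundE N : Rabs (Pn f N w) <= E.
Proof. eapply Rle_trans. apply P_bound. apply Pi_le_E, c_pos. Qed.

Lemma Q_bound N : Rabs (Pn g N w) <= 1.
Proof.
  induction N.
  - unfold Pn; simpl. rewrite Rabs_R1. lra.
  - rewrite Pn_S, Rabs_mult.
    replace 1 with (1 * 1) by ring.
    apply Rmult_le_compat; auto using Rabs_pos.
Qed.

Lemma dP_bound N : Rabs (dPn f f' N w) <= E * (E * B).
Proof.
  apply (rec_bound_E (fun N => Rabs (dPn f f' N w)) c (E * B)).
  - apply c_pos.
  - assert (H := E_ge1). nra.
  - simpl. rewrite Rabs_R0. lra.
  - intros n. rewrite !dPn_S.
    eapply Rle_trans. apply Rabs_triang. rewrite !Rabs_mult.
    apply Rplus_le_compat.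
    + apply Rmult_le_compat_l. apply Rabs_pos. apply f_absS.
    + assert (H2 := pow2_pos (S n)).
      rewrite abs_div2. unfold Rdiv.
      assert (H3 := P_boundE n). assert (H4 := Hfb (w * / 2 ^ S n)).
      assert (0 < / 2 ^ S n) by (apply Rinv_0_lt_compat; lra).
      rewrite <- Rmult_assoc. apply Rmult_le_compat_r. lra.
      apply Rmult_le_compat; auto using Rabs_pos.
Qed.

Lemma dQ_bound N : Rabs (dPn g g' N w) <= exp 0 * G.
Proof.
  apply (rec_bound_E (fun N => Rabs (dPn g g' N w)) 0 G); auto.
  - lra.
  - simpl. rewrite Rabs_R0. lra.
  - intros n. rewrite !dPn_S.
    eapply Rle_trans. apply Rabs_triang. rewrite !Rabs_mult.
    apply Rplus_le_compat.
    + unfold Rdiv. rewrite Rmult_0_l, Rplus_0_r, Rmult_1_r.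
      replace (Rabs (dPn g g' n w)) with (Rabs (dPn g g' n w) * 1) at 2 by ring.
      apply Rmult_le_compat_l. apply Rabs_pos. apply Hgb1.
    + assert (H2 := pow2_pos (S n)).
      rewrite abs_div2. unfold Rdiv.
      assert (H3 := Q_bound n). assert (H4 := Hgb (w * / 2 ^ S n)).
      assert (0 < / 2 ^ S n) by (apply Rinv_0_lt_compat; lra).
      rewrite <- Rmult_assoc. apply Rmult_le_compat_r. lra.
      replace G with (1 * G) by ring.
      apply Rmult_le_compat; auto using Rabs_pos.
Qed.

Lemma D_bound N : Rabs (Pn f N w - Pn g N w) <= E * (eps * W).
Proof.
  apply (rec_bound_E (fun N => Rabs (Pn f N w - Pn g N w)) c (eps * W)).
  - apply c_pos.
  - assert (H := W_pos). nra.
  - unfold Pn; simpl. replace (1 - 1) with 0 by ring. rewrite Rabs_R0. lra.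
  - intros n. rewrite !Pn_S.
    replace (Pn f n w * f (w / 2 ^ S n) - Pn g n w * g (w / 2 ^ S n)) with
      ((Pn f n w - Pn g n w) * f (w / 2 ^ S n) + Pn g n w * (f (w / 2 ^ S n) - g (w / 2 ^ S n))) by ring.
    eapply Rle_trans. apply Rabs_triang. rewrite !Rabs_mult.
    apply Rplus_le_compat.
    + apply Rmult_le_compat_l. apply Rabs_pos. apply f_absS.
    + assert (H3 := Q_bound n). assert (H4 := fg_near (w / 2 ^ S n)).
      rewrite absx in H4.
      replace (eps * W / 2 ^ S n) with (1 * (eps * (W / 2 ^ S n))) by (unfold Rdiv; ring).
      apply Rmult_le_compat; auto using Rabs_pos.
Qed.

Let K := G * (eps * W) + E * (eps * W) * B + eps.

Lemma dD_bound N : Rabs (dPn f f' N w - dPn g g' N w) <= E * K.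
Proof.
  assert (HW := W_pos). assert (HE := E_ge1).
  apply (rec_bound_E (fun N => Rabs (dPn f f' N w - dPn g g' N w)) c K).
  - apply c_pos.
  - unfold K. assert (0 <= eps * W) by nra. assert (0 <= E * (eps * W) * B).
    { apply Rmult_le_pos; nra. } nra.
  - simpl. replace (0 - 0) with 0 by ring. rewrite Rabs_R0. lra.
  - intros n. rewrite !dPn_S.
    set (x := w / 2 ^ S n).
    assert (H2 := pow2_pos (S n)).
    assert (Hi : 0 < / 2 ^ S n) by (apply Rinv_0_lt_compat; lra).
    replace (dPn f f' n w * f x + Pn f n w * (f' x / 2 ^ S n) -
       (dPn g g' n w * g x + Pn g n w * (g' x / 2 ^ S n))) with
      ((dPn f f' n w - dPn g g' n w) * f x +
       (dPn g g' n w * (f x - g x) + ((Pn f n w - Pn g n w) * f' x + Pn g n w * (f' x - g' x)) * / 2 ^ S n))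
      by (unfold Rdiv; ring).
    eapply Rle_trans. apply Rabs_triang. rewrite Rabs_mult.
    apply Rplus_le_compat.
    + apply Rmult_le_compat_l. apply Rabs_pos. apply f_absS.
    + eapply Rle_trans. apply Rabs_triang.
      assert (H3 := dQ_bound n). rewrite exp_0, Rmult_1_l in H3.
      assert (H4 := D_bound n). assert (H5 := Hfb x). assert (H6 := Q_bound n). assert (H7 := Hfg x).
      assert (H8 := fg_near x). unfold x in H8. rewrite absx in H8. fold x in H8.
      assert (h1 : Rabs (dPn g g' n w * (f x - g x)) <= G * (eps * (W / 2 ^ S n))).
      { rewrite Rabs_mult. apply Rmult_le_compat; auto using Rabs_pos. }
      assert (h2 : Rabs ((Pn f n w - Pn g n w) * f' x + Pn g n w * (f' x - g' x)) <= E * (eps * W) * B + eps).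
      { eapply Rle_trans. apply Rabs_triang. rewrite !Rabs_mult. apply Rplus_le_compat.
        apply Rmult_le_compat; auto using Rabs_pos.
        apply Rle_trans with (1 * eps); [apply Rmult_le_compat; auto using Rabs_pos | lra]. }
      rewrite (Rabs_mult _ (/ 2 ^ S n)), (Rabs_pos_eq (/ 2 ^ S n)) by lra.
      assert (h3 : Rabs ((Pn f n w - Pn g n w) * f' x + Pn g n w * (f' x - g' x)) * / 2 ^ S n
                   <= (E * (eps * W) * B + eps) * / 2 ^ S n).
      { apply Rmult_le_compat_r; lra. }
      replace (K / 2 ^ S n) with (G * (eps * (W / 2 ^ S n)) + (E * (eps * W) * B + eps) * / 2 ^ S n)
        by (unfold K, Rdiv; ring).
      lra.
Qed.

End Prod.

Lemma pow2_ge N : INR N + 1 <= 2 ^ N.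
Proof.
  induction N. simpl. lra.
  rewrite S_INR. simpl. assert (H := pow_R1_Rle 2 N ltac:(lra)). lra.
Qed.

Lemma tele (u : nat -> R) K :
  (forall N, Rabs (u (S N) - u N) <= K / 2 ^ S N) ->
  forall N k, Rabs (u (N + k)%nat - u N) <= K * (/ 2 ^ N - / 2 ^ (N + k)).
Proof.
  intros H N k. induction k.
  - rewrite Nat.add_0_r. replace (u N - u N) with 0 by ring. rewrite Rabs_R0.
    right; ring.
  - replace (N + S k)%nat with (S (N + k)) by lia.
    replace (u (S (N + k)) - u N) with ((u (S (N + k)) - u (N + k)%nat) + (u (N + k)%nat - u N)) by ring.
    eapply Rle_trans. apply Rabs_triang.
    assert (H1 := H (N + k)%nat).
    replace (K * (/ 2 ^ N - / 2 ^ S (N + k))) with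
      (K / 2 ^ S (N + k) + K * (/ 2 ^ N - / 2 ^ (N + k))).
    lra.
    unfold Rdiv. rewrite inv2S. field. split; apply Rgt_not_eq, pow2_pos.
Qed.

Lemma tele2 (u : nat -> R) K :
  0 <= K ->
  (forall N, Rabs (u (S N) - u N) <= K / 2 ^ S N) ->
  forall N n, (N <= n)%nat -> Rabs (u n - u N) <= K / 2 ^ N.
Proof.
  intros HK H N n Hn. replace n with (N + (n - N))%nat by lia.
  eapply Rle_trans. apply tele; auto.
  assert (0 < / 2 ^ (N + (n - N))) by (apply Rinv_0_lt_compat, pow2_pos).
  unfold Rdiv. nra.
Qed.

Lemma cauchy_gen (u : nat -> R -> R) (D : R -> Prop) K :
  0 <= K ->
  (forall N y, D y -> Rabs (u (S N) y - u N y) <= K / 2 ^ S N) ->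
  CVU_cauchy u D.
Proof.
  intros HK H eps.
  destruct (nfloor_ex (2 * K / eps)) as [n Hn].
  { apply Rdiv_le_0_compat. lra. apply cond_pos. }
  exists (S n). intros p q y Dy Hp Hq.
  assert (H1 := tele2 (fun N => u N y) K HK (fun N => H N y Dy) (S n) p Hp).
  assert (H2 := tele2 (fun N => u N y) K HK (fun N => H N y Dy) (S n) q Hq).
  cbv beta in H1, H2.
  replace (u p y - u q y) with ((u p y - u (S n) y) - (u q y - u (S n) y)) by ring.
  eapply Rle_lt_trans. apply Rabs_triang. rewrite Rabs_Ropp.
  assert (H3 := pow2_ge (S n)). rewrite S_INR in H3.
  assert (He := cond_pos eps).
  assert (H4 : 2 * K / eps < 2 ^ S n) by lra.
  assert (H5 : 2 * K < eps * 2 ^ S n).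
  { apply (Rmult_lt_compat_l eps) in H4; auto.
    replace (eps * (2 * K / eps)) with (2 * K) in H4 by (field; lra). lra. }
  assert (H6 := pow2_pos (S n)).
  assert (K / 2 ^ S n + K / 2 ^ S n < eps).
  { replace (K / 2 ^ S n + K / 2 ^ S n) with (2 * K / 2 ^ S n) by (field; lra).
    apply (Rmult_lt_reg_r (2 ^ S n)); auto. unfold Rdiv.
    rewrite Rmult_assoc, Rinv_l by lra. lra. }
  lra.
Qed.

Lemma cont_mult (f g : R -> R) x : continuous f x -> continuous g x -> continuous (fun y => f y * g y) x.
Proof. intros; apply (continuous_mult f g x); auto. Qed.
Lemma cont_plus (f g : R -> R) x : continuous f x -> continuous g x -> continuous (fun y => f y + g y) x.
Proof. intros; apply (continuous_plus f g x); auto. Qed.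
Lemma cont_minus (f g : R -> R) x : continuous f x -> continuous g x -> continuous (fun y => f y - g y) x.
Proof. intros; apply (continuous_minus f g x); auto. Qed.
Lemma cont_comp (f g : R -> R) x : continuous f x -> continuous g (f x) -> continuous (fun y => g (f y)) x.
Proof. intros; apply (continuous_comp f g x); auto. Qed.
Lemma cont_const (k x : R) : continuous (fun _ : R => k) x.
Proof. apply continuous_const. Qed.

Lemma cont_ex (f : R -> R) x : ex_derive f x -> continuous f x.
Proof. intros H. apply (ex_derive_continuous (K:=R_AbsRing) (V:=R_NormedModule)). exact H. Qed.

Lemma cont_scale (h : R -> R) k x : (forall y, continuous h y) -> continuous (fun w => h (w / 2 ^ k)) x.
Proof.
  intros Hh. apply cont_comp; auto. apply cont_ex. auto_derive. auto.
Qed.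

Lemma cont_Pn (h h' : R -> R) N x : (forall y, is_derive h y (h' y)) -> continuous (Pn h N) x.
Proof. intros Hh. apply cont_ex. eexists. apply is_derive_Pn; eauto. Qed.

Lemma cont_dPn (h h' : R -> R) N x : (forall y, is_derive h y (h' y)) -> (forall y, continuous h' y) ->
  continuous (dPn h h' N) x.
Proof.
  intros Hh Hh'. induction N.
  - simpl. apply cont_const.
  - apply (continuous_ext (fun y => dPn h h' N y * h (y / 2 ^ S N) + Pn h N y * (h' (y / 2 ^ S N) / 2 ^ S N))).
    intros; reflexivity.
    apply cont_plus; apply cont_mult; auto.
    + apply cont_scale. intros y. apply cont_ex. eexists; eauto.
    + apply cont_Pn with h'; auto.
    + apply cont_mult. apply cont_scale; auto. apply cont_const.
Qed.

Theorem prod_deriv (f f' g g' : R -> R) (B G eps : R) (Phi : R -> R) (rho R0 : R)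
  (Hf : forall x, is_derive f x (f' x))
  (Hfc : forall x, continuous f' x)
  (Hfb : forall x, Rabs (f' x) <= B)
  (Hf0 : f 0 = 1)
  (Hg : forall x, is_derive g x (g' x))
  (Hgb1 : forall x, Rabs (g x) <= 1)
  (Hgb : forall x, Rabs (g' x) <= G)
  (Hg0 : g 0 = 1)
  (Hfg : forall x, Rabs (f' x - g' x) <= eps)
  (HB : 0 <= B) (HG : 0 <= G) (Heps : 0 <= eps)
  (Hrho : 0 < rho)
  (HPhi1 : forall y, Rabs y <= rho -> Phi y = 1)
  (HPhi : forall y, Phi y = g (y / 2) * Phi (y / 2)) :
  forall w, Rabs w < R0 ->
  Rabs (Derive (fun w => real (Lim_seq (fun N => prod1 (fun j => f (w / 2 ^ j)) N))) w
        - Derive Phi w)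
  <= exp (B * R0) * (G * (eps * R0) + exp (B * R0) * (eps * R0) * B + eps).
Proof.
  intros w Hw.
  assert (HR0 : 0 <= R0) by (assert (H := Rabs_pos w); lra).
  set (D := fun y => - R0 < y < R0).
  set (ER := exp (B * R0)).
  assert (HER : 1 <= ER) by (unfold ER; assert (H := exp_ineq1_le (B * R0)); nra).
  assert (HBR : 0 <= B * R0) by (apply Rmult_le_pos; auto).
  assert (HD : forall y, D y -> Rabs y <= R0).
  { intros y [H1 H2]. unfold Rabs. destruct Rcase_abs; lra. }
  assert (HEy : forall y, D y -> exp (B * Rabs y) <= ER).
  { intros y Dy. apply exp_le_mono. apply Rmult_le_compat_l; auto. }
  assert (Hdf : forall n y, Derive (Pn f n) y = dPn f f' n y).
  { intros n y. apply is_derive_unique, is_derive_Pn; auto. }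
  assert (CP : CVU_dom (Pn f) D).
  { apply CVU_dom_cauchy. apply (cauchy_gen _ _ (ER * (B * R0))). apply Rmult_le_pos; lra.
    intros N y Dy. rewrite Pn_S.
    replace (Pn f N y * f (y / 2 ^ S N) - Pn f N y) with (Pn f N y * (f (y / 2 ^ S N) - 1)) by ring.
    rewrite Rabs_mult.
    assert (H1 := P_boundE f f' B Hf Hfb Hf0 HB y N).
    assert (H2 := f_near f f' B Hf Hfb Hf0 (y / 2 ^ S N)). rewrite abs_div2 in H2.
    assert (H3 := HEy y Dy). assert (H4 := HD y Dy).
    replace (ER * (B * R0) / 2 ^ S N) with (ER * (B * (R0 / 2 ^ S N))) by (unfold Rdiv; ring).
    apply Rmult_le_compat; auto using Rabs_pos. lra.
    eapply Rle_trans. apply H2. apply Rmult_le_compat_l; auto.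
    unfold Rdiv; apply Rmult_le_compat_r; [left; apply Rinv_0_lt_compat, pow2_pos | auto]. }
  assert (CdP : CVU_dom (fun n y => Derive (Pn f n) y) D).
  { apply CVU_dom_cauchy. apply (cauchy_gen _ _ (ER * (ER * B) * (B * R0) + ER * B)).
    { apply Rplus_le_le_0_compat; apply Rmult_le_pos; try nra. }
    intros N y Dy. rewrite !Hdf, dPn_S.
    replace (dPn f f' N y * f (y / 2 ^ S N) + Pn f N y * (f' (y / 2 ^ S N) / 2 ^ S N) - dPn f f' N y)
      with (dPn f f' N y * (f (y / 2 ^ S N) - 1) + Pn f N y * (f' (y / 2 ^ S N) / 2 ^ S N)) by ring.
    eapply Rle_trans. apply Rabs_triang. rewrite !Rabs_mult, abs_div2.
    assert (H1 := P_boundE f f' B Hf Hfb Hf0 HB y N).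
    assert (H1' := dP_bound f f' B Hf Hfb Hf0 HB y N).
    assert (H2 := f_near f f' B Hf Hfb Hf0 (y / 2 ^ S N)). rewrite abs_div2 in H2.
    assert (H3 := HEy y Dy). assert (H4 := HD y Dy).
    assert (H5 := Hfb (y / 2 ^ S N)).
    assert (H6 := pow2_pos (S N)).
    assert (Hi : 0 < / 2 ^ S N) by (apply Rinv_0_lt_compat; lra).
    set (E1 := exp (B * Rabs y)) in *.
    assert (0 <= E1) by (unfold E1; left; apply exp_pos).
    assert (Rabs (dPn f f' N y) <= ER * (ER * B)).
    { eapply Rle_trans. apply H1'. apply Rmult_le_compat; nra. }
    assert (Rabs (f (y / 2 ^ S N) - 1) <= B * R0 * / 2 ^ S N).
    { eapply Rle_trans. apply H2. unfold Rdiv. rewrite <- Rmult_assoc.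
      apply Rmult_le_compat_r. lra. apply Rmult_le_compat_l; auto. }
    assert (Rabs (Pn f N y) <= ER) by lra.
    assert (A1 : Rabs (dPn f f' N y) * Rabs (f (y / 2 ^ S N) - 1) <= ER * (ER * B) * (B * R0 * / 2 ^ S N))
      by (apply Rmult_le_compat; auto using Rabs_pos).
    assert (A2 : Rabs (Pn f N y) * (Rabs (f' (y / 2 ^ S N)) / 2 ^ S N) <= ER * (B * / 2 ^ S N)).
    { apply Rmult_le_compat; auto using Rabs_pos. unfold Rdiv. apply Rmult_le_pos. apply Rabs_pos. lra.
      unfold Rdiv. apply Rmult_le_compat_r; lra. }
    replace ((ER * (ER * B) * (B * R0) + ER * B) / 2 ^ S N) with
      (ER * (ER * B) * (B * R0 * / 2 ^ S N) + ER * (B * / 2 ^ S N)) by (unfold Rdiv; ring).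
    lra. }
  assert (HwD : D w) by (unfold D, Rabs in *; destruct Rcase_abs in Hw; lra).
  assert (Hopen : open D).
  { apply open_and. apply open_gt. apply open_lt. }
  assert (Hconn : is_connected D).
  { intros a b x Da Db Hx. unfold D in *. lra. }
  assert (Hder := CVU_Derive (Pn f) D Hopen Hconn CP
     (fun n x _ => ex_intro _ _ (is_derive_Pn f f' n x Hf))
     (fun n x _ => proj2 (continuity_pt_filterlim _ _)
        (continuous_ext _ _ x (fun y => eq_sym (Hdf n y)) (cont_dPn f f' n x Hf Hfc)))
     CdP w HwD).
  assert (Hd : Derive (fun w => real (Lim_seq (fun N => prod1 (fun j => f (w / 2 ^ j)) N))) w
     = real (Lim_seq (fun n => Derive (Pn f n) w))) by (apply is_derive_unique; exact Hder).
  rewrite Hd.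
  assert (Hex := CVU_CVS_dom _ _ CdP w HwD). cbv beta in Hex.
  assert (Hlim := Lim_seq_correct' _ Hex).
  set (l := real (Lim_seq (fun n => Derive (Pn f n) w))) in *.
  assert (HPhiN : forall N y, Phi y = Pn g N y * Phi (y / 2 ^ N)).
  { intros N y. induction N.
    - unfold Pn; simpl. rewrite Rmult_1_l. f_equal. field.
    - rewrite Pn_S, IHN, HPhi. 
      replace (y / 2 ^ N / 2) with (y / 2 ^ S N) by (simpl; field; apply Rgt_not_eq, pow2_pos).
      ring. }
  destruct (nfloor_ex (Rabs w / rho)) as [N0 HN0].
  { apply Rdiv_le_0_compat. apply Rabs_pos. auto. }
  assert (HdPhi : forall N, (N0 <= N)%nat -> Derive Phi w = dPn g g' N w).
  { intros N HN.
    assert (Hlt : Rabs w < 2 ^ N * rho).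
    { assert (H1 := pow2_ge N). assert (INR N0 <= INR N) by (apply le_INR; auto).
      assert (Rabs w / rho < 2 ^ N) by lra.
      apply (Rmult_lt_compat_r rho) in H0; auto.
      unfold Rdiv in H0. rewrite Rmult_assoc, Rinv_l in H0 by lra. lra. }
    rewrite <- (is_derive_unique _ _ _ (is_derive_Pn g g' N w Hg)).
    apply Derive_ext_loc.
    assert (Hloc := locally_abs_lt w _ Hlt).
    eapply filter_imp. 2: exact Hloc.
    intros y Hy. rewrite (HPhiN N y), HPhi1. ring.
    rewrite abs_div2. assert (H1 := pow2_pos N).
    apply Rmult_le_reg_r with (2 ^ N); auto. unfold Rdiv.
    rewrite Rmult_assoc, Rinv_l by lra. lra. }
  apply Rle_plus_epsilon. intros e He.
  apply is_lim_seq_spec in Hlim.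
  destruct (Hlim (mkposreal e He)) as [N1 HN1].
  set (N := max N0 N1).
  assert (H1 := HN1 N (Nat.le_max_r _ _)). simpl in H1.
  rewrite (HdPhi N (Nat.le_max_l _ _)).
  rewrite Hdf in H1.
  assert (H2 := dD_bound f f' g g' B G eps Hf Hfb Hf0 Hg Hgb1 Hgb Hg0 Hfg HB HG Heps w N).
  assert (HW : Rabs w <= R0) by lra.
  assert (Hc : exp (B * Rabs w) <= ER) by (apply exp_le_mono; apply Rmult_le_compat_l; auto).
  assert (0 <= eps * Rabs w) by (apply Rmult_le_pos; auto; apply Rabs_pos).
  assert (G * (eps * Rabs w) + exp (B * Rabs w) * (eps * Rabs w) * B + eps
          <= G * (eps * R0) + ER * (eps * R0) * B + eps).
  { assert (eps * Rabs w <= eps * R0) by (apply Rmult_le_compat_l; auto).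
    assert (exp (B * Rabs w) * (eps * Rabs w) <= ER * (eps * R0)).
    { apply Rmult_le_compat; auto. left; apply exp_pos. }
    assert (exp (B * Rabs w) * (eps * Rabs w) * B <= ER * (eps * R0) * B).
    { apply Rmult_le_compat_r; auto. }
    nra. }
  assert (0 <= G * (eps * Rabs w) + exp (B * Rabs w) * (eps * Rabs w) * B + eps).
  { assert (0 <= exp (B * Rabs w)) by (left; apply exp_pos). 
    assert (0 <= exp (B * Rabs w) * (eps * Rabs w)) by nra. nra. }
  assert (exp (B * Rabs w) * (G * (eps * Rabs w) + exp (B * Rabs w) * (eps * Rabs w) * B + eps)
          <= ER * (G * (eps * R0) + ER * (eps * R0) * B + eps)).
  { apply Rmult_le_compat; auto. left; apply exp_pos. }
  replace (l - dPn g g' N w) with ((l - dPn f f' N w) + (dPn f f' N w - dPn g g' N w)) by ring.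
  eapply Rle_trans. apply Rabs_triang.
  rewrite <- Rabs_Ropp, Ropp_minus_distr in H1.
  fold ER. lra.
Qed.

Lemma PI_gt3 : 3 < PI.
Proof. assert (H := PI2_3_2). lra. Qed.

Lemma is_derive_cst (k x : R) : is_derive (fun _ => k) x 0.
Proof. auto_derive; auto. Qed.

Lemma ballR (x e y : R) : Rabs (y - x) < e -> ball x e y.
Proof. intros H. unfold ball; simpl; unfold AbsRing_ball, abs, minus, plus, opp; simpl. exact H. Qed.

Lemma ballR' (x e y : R) : ball x e y -> Rabs (y - x) < e.
Proof. intros H. unfold ball in H; simpl in H; unfold AbsRing_ball, abs, minus, plus, opp in H; simpl in H. exact H. Qed.

Lemma loc_gt (a x : R) : a < x -> locally x (fun y => a < y).
Proof. intros H. apply (open_gt a). exact H. Qed.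
Lemma loc_lt (a x : R) : x < a -> locally x (fun y => y < a).
Proof. intros H. apply (open_lt a). exact H. Qed.

Lemma loc_ball (x d : R) : 0 < d -> locally x (fun y => Rabs (y - x) < d).
Proof. intros H. exists (mkposreal d H). intros y Hy. apply ballR'. exact Hy. Qed.

Lemma cont_right_const (f : R -> R) (x0 k : R) :
  continuous f x0 -> (forall y, x0 < y -> f y = k) -> f x0 = k.
Proof.
  intros Hc Hk. destruct (Req_dec (f x0) k) as [|Hne]; auto. exfalso.
  assert (He : 0 < Rabs (f x0 - k)) by (apply Rabs_pos_lt; lra).
  apply filterlim_locally with (eps := mkposreal _ He) in Hc.
  destruct Hc as [d Hd].
  assert (Hy : ball x0 d (x0 + d / 2)).
  { apply ballR. replace (x0 + d/2 - x0) with (d/2) by ring. assert (H := cond_pos d).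
    rewrite Rabs_pos_eq; lra. }
  specialize (Hd _ Hy). apply ballR' in Hd. simpl in Hd.
  rewrite Hk in Hd by (assert (H := cond_pos d); lra).
  rewrite <- Rabs_Ropp in Hd. replace (- (k - f x0)) with (f x0 - k) in Hd by ring. lra.
Qed.

Lemma C1_loc (F G G' : R -> R) x :
  locally x (fun y => F y = G y) -> locally x (fun y => is_derive G y (G' y)) -> continuous G' x ->
  is_derive F x (G' x) /\ continuous (Derive F) x /\ locally x (fun y => Derive F y = G' y).
Proof.
  intros H1 H2 H3.
  assert (H4 : locally x (fun y => is_derive F y (G' y))).
  { apply locally_locally in H1.
    eapply filter_imp. 2: exact (filter_and _ _ H1 H2).
    intros y [Hy1 Hy2]. eapply is_derive_ext_loc. 2: exact Hy2.
    eapply filter_imp. 2: exact Hy1. intros z Hz. simpl. auto. }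
  assert (H5 : locally x (fun y => Derive F y = G' y)).
  { eapply filter_imp. 2: exact H4. intros y Hy. apply is_derive_unique. exact Hy. }
  split; [|split; auto].
  - apply locally_singleton in H4. exact H4.
  - eapply continuous_ext_loc. 2: exact H3. eapply filter_imp. 2: exact H5. intros y Hy. auto.
Qed.

Section Theta.
Variable theta : R -> R.
Hypothesis theta_odd : forall x, theta (- x) = - theta x.
Hypothesis theta_d1 : forall x, ex_derive theta x.
Hypothesis theta_d2 : forall x, ex_derive (Derive theta) x.
Hypothesis theta_const : forall x, PI / 3 < x -> theta x = PI / 4.

Lemma th_cont x : continuous theta x.
Proof. apply cont_ex, theta_d1. Qed.

Lemma th'_cont x : continuous (Derive theta) x.
Proof. apply cont_ex, theta_d2. Qed.

Lemma th_pi3 : theta (PI / 3) = PI / 4.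
Proof. apply cont_right_const; auto using th_cont. Qed.

Lemma th_ge x : PI / 3 <= x -> theta x = PI / 4.
Proof. intros [H|H]; auto. subst. apply th_pi3. Qed.

Lemma th_le x : x <= - (PI / 3) -> theta x = - (PI / 4).
Proof. intros H. replace x with (- (- x)) by ring. rewrite theta_odd, th_ge; auto. lra. Qed.

Lemma th'_zero x : PI / 3 < Rabs x -> Derive theta x = 0.
Proof.
  intros H. apply is_derive_unique.
  unfold Rabs in H. destruct Rcase_abs in H.
  - apply (is_derive_ext_loc (fun _ => - (PI / 4))). 
    + eapply filter_imp. 2: apply (loc_lt (- (PI / 3)) x); lra.
      intros y Hy. simpl. rewrite th_le; auto. lra.
    + apply is_derive_cst.
  - apply (is_derive_ext_loc (fun _ => PI / 4)).
    + eapply filter_imp. 2: apply (loc_gt (PI / 3) x); lra.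
      intros y Hy. simpl. rewrite th_ge; auto. lra.
    + apply is_derive_cst.
Qed.

Lemma th'_bound : exists T, 0 <= T /\ forall x, Rabs (Derive theta x) <= T.
Proof.
  destruct (continuity_ab_maj (fun x => Rabs (Derive theta x)) (-2) 2) as [Mx [HM _]].
  lra.
  { intros c _. apply continuity_pt_filterlim. apply continuous_Rabs_comp. apply th'_cont. }
  exists (Rabs (Derive theta Mx)). split. apply Rabs_pos.
  intros x. destruct (Rle_dec (Rabs x) 2).
  - apply HM. unfold Rabs in r; destruct Rcase_abs in r; lra.
  - rewrite th'_zero. rewrite Rabs_R0. apply Rabs_pos.
    assert (H := PI_4). lra.
Qed.
End Theta.

Definition cc (w0 : R) : R := PI / (3 * (PI - 2 * w0)).
Definition Psi (theta : R -> R) (w0 t : R) : R := cos (PI / 4 + theta (cc w0 * (t - PI))).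
Definition dPsi (theta : R -> R) (w0 t : R) : R :=
  - sin (PI / 4 + theta (cc w0 * (t - PI))) * (Derive theta (cc w0 * (t - PI)) * cc w0).

Section Phi.
Variable theta : R -> R.
Variable w0 : R.
Hypothesis theta_odd : forall x, theta (- x) = - theta x.
Hypothesis theta_d1 : forall x, ex_derive theta x.
Hypothesis theta_d2 : forall x, ex_derive (Derive theta) x.
Hypothesis theta_const : forall x, PI / 3 < x -> theta x = PI / 4.
Hypothesis w0_range : PI / 3 <= w0 < PI / 2.

Lemma cc_pos : 0 < cc w0.
Proof.
  unfold cc. assert (H := PI_gt3). apply Rdiv_lt_0_compat. lra. lra.
Qed.

Lemma cc_lo : cc w0 * (2 * w0 - PI) = - (PI / 3).
Proof. unfold cc. field. lra. Qed.
Lemma cc_hi : cc w0 * (2 * PI - 2 * w0 - PI) = PI / 3.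
Proof. unfold cc. field. lra. Qed.

Lemma Psi_1 t : t <= 2 * w0 -> Psi theta w0 t = 1.
Proof.
  intros H. unfold Psi. rewrite (th_le theta); auto.
  replace (PI / 4 + - (PI / 4)) with 0 by ring. apply cos_0.
  rewrite <- cc_lo. apply Rmult_le_compat_l. left; apply cc_pos. lra.
Qed.

Lemma Psi_0 t : 2 * PI - 2 * w0 <= t -> Psi theta w0 t = 0.
Proof.
  intros H. unfold Psi. rewrite (th_ge theta); auto.
  replace (PI / 4 + PI / 4) with (PI / 2) by field. apply cos_PI2.
  rewrite <- cc_hi. apply Rmult_le_compat_l. left; apply cc_pos. lra.
Qed.

Lemma phiM_Psi x : phiM theta w0 x = Psi theta w0 (Rabs x).
Proof.
  unfold phiM. destruct Rle_dec.
  - rewrite Psi_1; auto.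
  - destruct Rle_dec. reflexivity. rewrite Psi_0; auto. lra.
Qed.

Lemma phiM_bound x : Rabs (phiM theta w0 x) <= 1.
Proof. rewrite phiM_Psi. unfold Psi. apply Rabs_le. apply COS_bound. Qed.

Lemma phiM_1 x : Rabs x <= 2 * w0 -> phiM theta w0 x = 1.
Proof. intros H. rewrite phiM_Psi. apply Psi_1; auto. Qed.

Lemma phiM_0 x : 2 * PI - 2 * w0 <= Rabs x -> phiM theta w0 x = 0.
Proof. intros H. rewrite phiM_Psi. apply Psi_0; auto. Qed.

Lemma Psi_der t : is_derive (Psi theta w0) t (dPsi theta w0 t).
Proof.
  unfold Psi, dPsi. auto_derive.
  - apply theta_d1.
  - change (fun x : R => theta x) with theta. unfold Rminus. ring.
Qed.

Lemma dPsi_cont t : continuous (dPsi theta w0) t.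
Proof.
  unfold dPsi. apply cont_mult.
  - apply cont_ex. auto_derive. apply theta_d1.
  - apply cont_mult; [|apply cont_const].
    apply (cont_comp (fun t => cc w0 * (t - PI)) (Derive theta)).
    apply cont_ex; auto_derive; auto. apply (th'_cont theta theta_d2).
Qed.

Variable T : R.
Hypothesis HT : forall x, Rabs (Derive theta x) <= T.

Lemma dPsi_bound t : Rabs (dPsi theta w0 t) <= T * cc w0.
Proof.
  unfold dPsi. rewrite !Rabs_mult, Rabs_Ropp, (Rabs_pos_eq (cc w0)) by (left; apply cc_pos).
  assert (H1 : Rabs (sin (PI / 4 + theta (cc w0 * (t - PI)))) <= 1) by (apply Rabs_le, SIN_bound).
  assert (H2 := HT (cc w0 * (t - PI))). assert (H3 := cc_pos).
  assert (0 <= T) by (eapply Rle_trans; [apply Rabs_pos|apply H2]).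
  replace (T * cc w0) with (1 * (T * cc w0)) by ring.
  apply Rmult_le_compat; auto using Rabs_pos. apply Rmult_le_pos. apply Rabs_pos. lra.
  apply Rmult_le_compat_r; lra.
Qed.

Lemma phiM_C1 x : is_derive (phiM theta w0) x (Derive (phiM theta w0) x) /\ continuous (Derive (phiM theta w0)) x /\ Rabs (Derive (phiM theta w0) x) <= T * cc w0.
Proof.
  assert (HTc : 0 <= T * cc w0) by (eapply Rle_trans; [apply Rabs_pos|apply (dPsi_bound 0)]).
  destruct (Rtotal_order x 0) as [Hx|[Hx|Hx]].
  - destruct (C1_loc (phiM theta w0) (fun y => Psi theta w0 (- y)) (fun y => - dPsi theta w0 (- y)) x)
      as [H1 [H2 H3]].
    + eapply filter_imp. 2: apply (loc_lt 0 x Hx). intros y Hy. rewrite phiM_Psi.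
      rewrite Rabs_left; auto.
    + apply filter_forall. intros y.
      replace (- dPsi theta w0 (- y)) with (scal (-1) (dPsi theta w0 (- y)))
        by (unfold scal; simpl; unfold mult; simpl; ring).
      apply (is_derive_comp (Psi theta w0) (fun y => - y)). apply Psi_der.
      auto_derive; auto.
    + apply (cont_comp (fun y => - y) (fun z => - dPsi theta w0 z)).
      apply cont_ex; auto_derive; auto.
      apply (continuous_opp (dPsi theta w0)). apply dPsi_cont.
    + apply locally_singleton in H3. rewrite H3.
      split; [|split]; auto. rewrite Rabs_Ropp. apply dPsi_bound.
  - subst x.
    destruct (C1_loc (phiM theta w0) (fun _ => 1) (fun _ => 0) 0) as [H1 [H2 H3]].
    + assert (Hw : 0 < 2 * w0) by (assert (H := PI_gt3); lra).
      eapply filter_imp. 2: apply (loc_ball 0 (2 * w0) Hw). intros y Hy. apply phiM_1.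
      simpl in Hy. unfold Rminus in Hy. rewrite Ropp_0, Rplus_0_r in Hy. lra.
    + apply filter_forall. intros y. apply is_derive_cst.
    + apply cont_const.
    + apply locally_singleton in H3. rewrite H3.
      split; [|split]; auto. rewrite Rabs_R0. auto.
  - destruct (C1_loc (phiM theta w0) (Psi theta w0) (dPsi theta w0) x) as [H1 [H2 H3]].
    + eapply filter_imp. 2: apply (loc_gt 0 x Hx). intros y Hy. rewrite phiM_Psi.
      rewrite Rabs_right; auto. lra.
    + apply filter_forall. intros y. apply Psi_der.
    + apply dPsi_cont.
    + apply locally_singleton in H3. rewrite H3.
      split; [|split]; auto. apply dPsi_bound.
Qed.
End Phi.

Lemma IZR_small (m : Z) : -2 < IZR m < 2 -> m = (-1)%Z \/ m = 0%Z \/ m = 1%Z.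
Proof.
  intros [H1 H2].
  assert (A1 : (-2 < m)%Z) by (apply lt_IZR; simpl; lra).
  assert (A2 : (m < 2)%Z) by (apply lt_IZR; simpl; lra).
  lia.
Qed.

Lemma IZR_small1 (m : Z) : -1 < IZR m < 1 -> m = 0%Z.
Proof.
  intros [H1 H2].
  assert (A1 : (-1 < m)%Z) by (apply lt_IZR; simpl; lra).
  assert (A2 : (m < 1)%Z) by (apply lt_IZR; simpl; lra).
  lia.
Qed.

Lemma red_eq x : red2pi x = x - 2 * PI * IZR (up ((x - PI) / (2 * PI))).
Proof. reflexivity. Qed.

Lemma red_range x : - PI <= red2pi x < PI.
Proof.
  rewrite red_eq. set (z := (x - PI) / (2 * PI)).
  destruct (archimed z) as [H1 H2].
  assert (HP := PI_gt3).
  assert (Hz : 2 * PI * z = x - PI) by (unfold z; field; lra).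
  split.
  - assert (2 * PI * IZR (up z) <= 2 * PI * (z + 1)).
    { apply Rmult_le_compat_l; lra. }
    nra.
  - assert (2 * PI * z < 2 * PI * IZR (up z)).
    { apply Rmult_lt_compat_l; lra. }
    nra.
Qed.

Lemma red_unique x u (m : Z) : - PI <= u < PI -> u = x - 2 * PI * IZR m -> red2pi x = u.
Proof.
  intros Hu Hm. assert (Hr := red_range x). rewrite red_eq in *.
  set (n := up ((x - PI) / (2 * PI))) in *.
  assert (HP := PI_gt3).
  assert (Hd : - 1 < IZR (m - n) < 1).
  { rewrite minus_IZR. subst u. split.
    - apply (Rmult_lt_reg_l (2 * PI)). lra. nra.
    - apply (Rmult_lt_reg_l (2 * PI)). lra. nra. }
  apply IZR_small1 in Hd. assert (m = n) by lia. subst. reflexivity.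
Qed.

Lemma red_shift x (n : Z) : red2pi (x + 2 * PI * IZR n) = red2pi x.
Proof.
  apply red_unique with (up ((x - PI) / (2 * PI)) + n)%Z.
  apply red_range. rewrite red_eq, plus_IZR. ring.
Qed.

Lemma red_small x : - PI <= x < PI -> red2pi x = x.
Proof. intros H. apply red_unique with 0%Z; auto. simpl. ring. Qed.

Lemma red_local x y : Rabs (y - x) < PI ->
  exists k : Z, (k = (-1)%Z \/ k = 0%Z \/ k = 1%Z) /\ red2pi y = red2pi x + (y - x) + 2 * PI * IZR k.
Proof.
  intros Hxy.
  assert (Hx := red_range x). assert (Hy := red_range y).
  rewrite !red_eq in *.
  set (nx := up ((x - PI) / (2 * PI))) in *.
  set (ny := up ((y - PI) / (2 * PI))) in *.
  exists (nx - ny)%Z. split.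
  - apply IZR_small. rewrite minus_IZR. assert (HP := PI_gt3).
    apply Rabs_def2 in Hxy. destruct Hxy.
    split.
    + apply (Rmult_lt_reg_l (2 * PI)). lra. nra.
    + apply (Rmult_lt_reg_l (2 * PI)). lra. nra.
  - rewrite minus_IZR. ring.
Qed.

Section MM.
Variable theta : R -> R.
Variable w0 : R.
Hypothesis theta_odd : forall x, theta (- x) = - theta x.
Hypothesis theta_d1 : forall x, ex_derive theta x.
Hypothesis theta_d2 : forall x, ex_derive (Derive theta) x.
Hypothesis theta_const : forall x, PI / 3 < x -> theta x = PI / 4.
Hypothesis w0_range : PI / 3 <= w0 < PI / 2.
Variable T : R.
Hypothesis HT : forall x, Rabs (Derive theta x) <= T.

Let phi := phiM theta w0.
Let m := mM theta w0.

Lemma mM_eq x : m x = phi (2 * red2pi x).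
Proof. reflexivity. Qed.

Lemma phi_0' x : 2 * PI - 2 * w0 <= Rabs x -> phi x = 0.
Proof. apply phiM_0; auto. Qed.

Lemma phi_1' x : Rabs x <= 2 * w0 -> phi x = 1.
Proof. apply phiM_1; auto. Qed.

Lemma phi_0'' x : 2 * PI - 2 * w0 <= x \/ x <= - (2 * PI - 2 * w0) -> phi x = 0.
Proof.
  intros H. apply phi_0'. unfold Rabs; destruct Rcase_abs; destruct H; lra.
Qed.

Lemma mM_local x y : Rabs (y - x) < w0 / 2 -> m y = phi (2 * (red2pi x + (y - x))).
Proof.
  intros Hxy. assert (HP := PI_gt3).
  destruct (red_local x y) as [k [Hk Hr]]. apply Rabs_def2 in Hxy. apply Rabs_def1; lra.
  rewrite mM_eq, Hr.
  assert (Hx := red_range x). assert (Hy := red_range y).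
  apply Rabs_def2 in Hxy. destruct Hxy as [H1 H2].
  rewrite Hr in Hy.
  destruct Hk as [Hk|[Hk|Hk]]; subst k.
  - simpl IZR in *. rewrite !phi_0''. auto. lra. lra.
  - simpl. f_equal. ring.
  - simpl IZR in *. rewrite !phi_0''. auto. lra. lra.
Qed.

Lemma w0_pos : 0 < w0.
Proof. assert (H := PI_gt3). lra. Qed.

Lemma mM_C1 x : is_derive m x (Derive m x) /\ continuous (Derive m) x /\
  Rabs (Derive m x) <= 2 * (T * cc w0).
Proof.
  set (r := red2pi x).
  assert (Hphi := phiM_C1 theta w0 theta_odd theta_d1 theta_d2 theta_const w0_range T HT).
  destruct (C1_loc m (fun y => phi (2 * (r + (y - x)))) (fun y => 2 * Derive phi (2 * (r + (y - x)))) x)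
    as [H1 [H2 H3]].
  - assert (Hw : 0 < w0 / 2) by (assert (H := w0_pos); lra).
    eapply filter_imp. 2: apply (loc_ball x _ Hw). intros y Hy. apply mM_local; auto.
  - apply filter_forall. intros y.
    replace (2 * Derive phi (2 * (r + (y - x)))) with (scal 2 (Derive phi (2 * (r + (y - x)))))
      by (unfold scal; simpl; unfold mult; simpl; ring).
    apply (is_derive_comp phi (fun y => 2 * (r + (y - x)))).
    apply Hphi. auto_derive; auto. ring.
  - apply cont_mult. apply cont_const.
    apply (cont_comp (fun y => 2 * (r + (y - x))) (Derive phi)).
    apply cont_ex; auto_derive; auto. apply Hphi.
  - apply locally_singleton in H3. rewrite H3. split; [|split]; auto.
    rewrite Rabs_mult, Rabs_pos_eq by lra. apply Rmult_le_compat_l. lra. apply Hphi.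
Qed.

Lemma mM_bound x : Rabs (m x) <= 1.
Proof. rewrite mM_eq. eapply phiM_bound; eauto. Qed.

Lemma mM_0 : m 0 = 1.
Proof.
  rewrite mM_eq, red_small. eapply phiM_1; eauto. rewrite Rmult_0_r, Rabs_R0.
  assert (H := w0_pos). lra. assert (H := PI_gt3). lra.
Qed.

Lemma mM_zero_near x : red2pi x = - PI -> forall y, Rabs (y - x) < w0 / 2 -> m y = 0.
Proof.
  intros Hx y Hy. rewrite (mM_local x y Hy), Hx. apply phi_0''.
  apply Rabs_def2 in Hy. right. lra.
Qed.

Lemma refine y : phi y = m (y / 2) * phi (y / 2).
Proof.
  assert (HP := PI_gt3). assert (Hw := w0_pos).
  destruct (Rle_dec (Rabs y) (2 * PI - 2 * w0)) as [Hy|Hy].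
  - assert (Hz : Rabs (y / 2) <= PI - w0).
    { unfold Rdiv. rewrite Rabs_mult, (Rabs_pos_eq (/ 2)) by lra. lra. }
    rewrite mM_eq, red_small.
    + replace (2 * (y / 2)) with y by field. rewrite (phi_1' (y / 2)).
      ring. lra.
    + unfold Rabs in Hz; destruct Rcase_abs in Hz; lra.
  - rewrite (phi_0' y) by lra.
    destruct (Rle_dec (2 * PI - 2 * w0) (Rabs (y / 2))) as [Hz|Hz].
    + rewrite (phi_0' (y / 2)); auto. ring.
    + rewrite mM_eq.
      assert (Hr := red_range (y / 2)).
      rewrite red_eq in *.
      set (n := up ((y / 2 - PI) / (2 * PI))) in *.
      assert (Hz2 : Rabs (y / 2) < 2 * PI - 2 * w0) by lra.
      apply Rabs_def2 in Hz2.
      assert (Hn : n = (-1)%Z \/ n = 0%Z \/ n = 1%Z).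
      { apply IZR_small. split.
        - apply (Rmult_lt_reg_l (2 * PI)). lra. nra.
        - apply (Rmult_lt_reg_l (2 * PI)). lra. nra. }
      rewrite phi_0''. ring.
      assert (Hy2 : y / 2 = y * / 2) by reflexivity.
      destruct Hn as [Hn|[Hn|Hn]]; rewrite Hn in *; simpl IZR in *.
      * left. lra.
      * unfold Rabs in Hy. destruct Rcase_abs in Hy; lra.
      * right. lra.
Qed.
End MM.

Definition hh (l : nat) (y : R) : R := cos (y / 2) ^ (2 * l).
Definition dhh (l : nat) (y : R) : R := - INR l * cos (y / 2) ^ (2 * l - 1) * sin (y / 2).

Lemma hh_der l y : is_derive (hh l) y (dhh l y).
Proof.
  unfold hh, dhh. auto_derive. auto.
  replace (l + (l + 0))%nat with (2 * l)%nat by lia.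
  rewrite Nat.sub_1_r, mult_INR. simpl INR. unfold Rdiv. field.
Qed.

Lemma hh_cont l y : continuous (hh l) y.
Proof. apply cont_ex. eexists; apply hh_der. Qed.

Lemma dhh_cont l y : continuous (dhh l) y.
Proof. apply cont_ex. unfold dhh. auto_derive. auto. Qed.

Lemma hh_bound l y : Rabs (hh l y) <= 1.
Proof.
  unfold hh. rewrite <- RPow_abs. rewrite <- (pow1 (2 * l)). apply pow_incr.
  split. apply Rabs_pos. apply Rabs_le, COS_bound.
Qed.

Lemma dhh_bound l y : Rabs (dhh l y) <= INR l.
Proof.
  unfold dhh. rewrite !Rabs_mult, Rabs_Ropp, Rabs_pos_eq by apply pos_INR.
  rewrite <- RPow_abs.
  assert (H1 : Rabs (cos (y / 2)) ^ (2 * l - 1) <= 1).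
  { rewrite <- (pow1 (2 * l - 1)). apply pow_incr. split. apply Rabs_pos. apply Rabs_le, COS_bound. }
  assert (H2 : Rabs (sin (y / 2)) <= 1) by apply Rabs_le, SIN_bound.
  assert (H3 : 0 <= Rabs (cos (y / 2)) ^ (2 * l - 1)) by (apply pow_le, Rabs_pos).
  assert (H4 := pos_INR l).
  replace (INR l) with (INR l * 1 * 1) at 2 by ring.
  apply Rmult_le_compat; auto using Rabs_pos. nra.
  apply Rmult_le_compat_l; auto.
Qed.

Lemma hh_shift l x : hh l (x + 2 * PI) = hh l x.
Proof.
  unfold hh. replace ((x + 2 * PI) / 2) with (x / 2 + PI) by field.
  rewrite neg_cos, pow_mult, pow_mult. f_equal. ring.
Qed.

Lemma cos_half_zero x : cos (x / 2) = 0 -> red2pi x = - PI.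
Proof.
  intros H. apply cos_eq_0_0 in H. destruct H as [k Hk].
  apply red_unique with (k + 1)%Z. assert (HP := PI_gt3). lra.
  rewrite plus_IZR. simpl IZR. replace x with (2 * (x / 2)) by field. rewrite Hk. field.
Qed.

Lemma hh_zero l x : hh l x = 0 -> red2pi x = - PI.
Proof. intros H. apply cos_half_zero. unfold hh in H. destruct (Req_dec (cos (x / 2)) 0); auto. exfalso. apply (pow_nonzero _ (2 * l) H0). auto. Qed.

Lemma per_nat (F : R -> R) : (forall x, F (x + 2 * PI) = F x) ->
  forall (k : nat) x, F (x + 2 * PI * INR k) = F x.
Proof.
  intros H k. induction k; intros x.
  - simpl. f_equal. ring.
  - rewrite S_INR. replace (x + 2 * PI * (INR k + 1)) with ((x + 2 * PI * INR k) + 2 * PI) by ring.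
    rewrite H. auto.
Qed.

Lemma per_Z (F : R -> R) : (forall x, F (x + 2 * PI) = F x) ->
  forall (n : Z) x, F (x + 2 * PI * IZR n) = F x.
Proof.
  intros H n x. destruct (Z.le_gt_cases 0 n) as [Hn|Hn].
  - rewrite <- (Z2Nat.id n) by lia. rewrite <- INR_IZR_INZ. apply per_nat; auto.
  - assert (Hm : (0 <= - n)%Z) by lia.
    set (k := Z.to_nat (- n)).
    assert (Hk : IZR n = - INR k).
    { unfold k. rewrite INR_IZR_INZ, Z2Nat.id by lia. rewrite opp_IZR. ring. }
    rewrite Hk. rewrite <- (per_nat F H k (x + 2 * PI * - INR k)). f_equal. ring.
Qed.

Lemma per_red (F : R -> R) : (forall x, F (x + 2 * PI) = F x) -> forall x, F x = F (red2pi x).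
Proof.
  intros H x. rewrite red_eq.
  rewrite <- (per_Z F H (up ((x - PI) / (2 * PI))) (x - 2 * PI * IZR (up ((x - PI) / (2 * PI))))). f_equal. ring.
Qed.

Lemma loc_nonzero (f : R -> R) x : continuous f x -> f x <> 0 -> locally x (fun y => f y <> 0).
Proof.
  intros Hc Hx. assert (He : 0 < Rabs (f x)) by (apply Rabs_pos_lt; auto).
  apply filterlim_locally with (eps := mkposreal _ He) in Hc.
  eapply filter_imp. 2: exact Hc. intros y Hy Hy0. apply ballR' in Hy. simpl in Hy.
  rewrite Hy0 in Hy. replace (0 - f x) with (- f x) in Hy by ring. rewrite Rabs_Ropp in Hy. lra.
Qed.

Section MMl.
Variable theta : R -> R.
Variable w0 : R.
Hypothesis theta_odd : forall x, theta (- x) = - theta x.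
Hypothesis theta_d1 : forall x, ex_derive theta x.
Hypothesis theta_d2 : forall x, ex_derive (Derive theta) x.
Hypothesis theta_const : forall x, PI / 3 < x -> theta x = PI / 4.
Hypothesis w0_range : PI / 3 <= w0 < PI / 2.
Variable T : R.
Hypothesis HT : forall x, Rabs (Derive theta x) <= T.
Variable l : nat.

Let m := mM theta w0.
Let M := mMl theta w0 l.

Lemma M_eq x : M x = m x / hh l x.
Proof. reflexivity. Qed.

Lemma mC1 x : is_derive m x (Derive m x) /\ continuous (Derive m) x /\
  Rabs (Derive m x) <= 2 * (T * cc w0).
Proof. apply (mM_C1 theta w0 theta_odd theta_d1 theta_d2 theta_const w0_range T HT). Qed.

Lemma m_zero_near x : red2pi x = - PI -> forall y, Rabs (y - x) < w0 / 2 -> m y = 0.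
Proof. apply (mM_zero_near theta w0 theta_odd theta_d1 theta_const w0_range). Qed.

Lemma mM_hM x : m x = hh l x * M x.
Proof.
  rewrite M_eq. destruct (Req_dec (hh l x) 0) as [H|H].
  - rewrite H, Rmult_0_l. apply (m_zero_near x (hh_zero l x H)).
    replace (x - x) with 0 by ring. rewrite Rabs_R0. assert (HP := PI_gt3). lra.
  - field. auto.
Qed.

Lemma M_C1 x : is_derive M x (Derive M x) /\ continuous (Derive M) x.
Proof.
  destruct (Req_dec (hh l x) 0) as [H|H].
  - assert (Hr := hh_zero l x H).
    destruct (C1_loc M (fun _ => 0) (fun _ => 0) x) as [H1 [H2 H3]].
    + assert (Hw : 0 < w0 / 2) by (assert (HP := PI_gt3); lra).
      eapply filter_imp. 2: apply (loc_ball x _ Hw). intros y Hy.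
      rewrite M_eq, (m_zero_near x Hr y Hy). unfold Rdiv. ring.
    + apply filter_forall. intros y. apply is_derive_cst.
    + apply cont_const.
    + apply locally_singleton in H3. rewrite H3. auto.
  - destruct (C1_loc M M (fun y => (Derive m y * hh l y - m y * dhh l y) / (hh l y) ^ 2) x) as [H1 [H2 H3]].
    + apply filter_forall. auto.
    + eapply filter_imp. 2: apply (loc_nonzero (hh l) x (hh_cont l x) H).
      intros y Hy.
      apply (is_derive_div m (hh l) y); auto. apply mC1. apply hh_der.
    + apply cont_mult.
      * apply cont_minus; apply cont_mult.
        apply mC1. apply hh_cont.
        apply cont_ex. eexists. apply mC1. apply dhh_cont.
      * apply continuous_Rinv_comp.
        apply (cont_mult (hh l) (fun y => hh l y ^ 1)). apply hh_cont.
        apply cont_mult. apply hh_cont. apply cont_const.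
        apply pow_nonzero. auto.
    + apply locally_singleton in H3. rewrite H3. auto.
Qed.

Lemma m_shift x : m (x + 2 * PI) = m x.
Proof.
  unfold m. rewrite !mM_eq. f_equal. f_equal.
  replace (x + 2 * PI) with (x + 2 * PI * IZR 1) by (simpl; ring). apply red_shift.
Qed.

Lemma M_shift x : M (x + 2 * PI) = M x.
Proof. rewrite !M_eq, m_shift, hh_shift. reflexivity. Qed.

Lemma DM_shift x : Derive M (x + 2 * PI) = Derive M x.
Proof.
  symmetry. apply is_derive_unique.
  destruct (M_C1 (x + 2 * PI)) as [H _].
  assert (H2 : is_derive (fun y => M (y + 2 * PI)) x (Derive M (x + 2 * PI))).
  { replace (Derive M (x + 2 * PI)) with (scal 1 (Derive M (x + 2 * PI)))
      by (unfold scal; simpl; unfold mult; simpl; ring).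
    apply (is_derive_comp M (fun y => y + 2 * PI)). auto. auto_derive; auto. }
  eapply is_derive_ext. 2: exact H2. intros t. simpl. apply M_shift.
Qed.

Lemma M_0 : M 0 = 1.
Proof.
  rewrite M_eq. unfold m. rewrite (mM_0 theta w0 theta_odd theta_d1 theta_const w0_range).
  unfold hh. replace (0 / 2) with 0 by field. rewrite cos_0, pow1. field.
Qed.

Lemma M_PI : M PI = 0.
Proof.
  rewrite M_eq. unfold m. rewrite mM_eq.
  replace (red2pi PI) with (- PI).
  rewrite (phiM_0 theta w0 theta_odd theta_d1 theta_const w0_range). unfold Rdiv; ring.
  rewrite Rabs_mult, Rabs_Ropp, !Rabs_pos_eq; assert (HP := PI_gt3); lra.
  symmetry. apply red_unique with 1%Z. assert (HP := PI_gt3); lra. simpl. ring.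
Qed.

Lemma M_mPI : M (- PI) = 0.
Proof.
  rewrite <- M_PI. replace PI with (- PI + 2 * PI) at 2 by ring. rewrite M_shift. auto.
Qed.
End MMl.

Lemma sum1_ext (g1 g2 : nat -> R) n : (forall k, g1 k = g2 k) -> sum1 g1 n = sum1 g2 n.
Proof. intros H. induction n; simpl; auto. rewrite IHn, H. auto. Qed.

Lemma sum1_der (g g' : nat -> R -> R) n w :
  (forall k x, is_derive (g k) x (g' k x)) ->
  is_derive (fun x => sum1 (fun k => g k x) n) w (sum1 (fun k => g' k w) n).
Proof.
  intros H. induction n; simpl.
  - apply is_derive_cst.
  - apply (is_derive_plus (fun x => sum1 (fun k => g k x) n) (g (S n))); auto.
Qed.

Lemma sum1_cont (g : nat -> R -> R) n w :
  (forall k x, continuous (g k) x) -> continuous (fun x => sum1 (fun k => g k x) n) w.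
Proof.
  intros H. induction n; simpl.
  - apply cont_const.
  - apply cont_plus; auto.
Qed.

Definition dusum (lam : nat -> nat -> R) (n : nat) (f : R -> R) (w : R) : R :=
  sum1 (fun k => lam n k * (fourier_a f k * (- (INR k * sin (INR k * w)))
                            + fourier_b f k * (INR k * cos (INR k * w)))) n.

Lemma usum_der lam n f w : is_derive (usum lam n f) w (dusum lam n f w).
Proof.
  unfold usum, dusum.
  replace (sum1 (fun k => lam n k * (fourier_a f k * (- (INR k * sin (INR k * w)))
                            + fourier_b f k * (INR k * cos (INR k * w)))) n)
    with (0 + sum1 (fun k => lam n k * (fourier_a f k * (- (INR k * sin (INR k * w)))
                            + fourier_b f k * (INR k * cos (INR k * w)))) n) by ring.
  apply (is_derive_plus (fun _ => fourier_a f 0 / 2)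
    (fun x => sum1 (fun k => lam n k * (fourier_a f k * cos (INR k * x) + fourier_b f k * sin (INR k * x))) n)).
  apply is_derive_cst.
  set (G := fun k x => lam n k * (fourier_a f k * cos (INR k * x) + fourier_b f k * sin (INR k * x))).
  set (G' := fun k w => lam n k * (fourier_a f k * (- (INR k * sin (INR k * w)))
                            + fourier_b f k * (INR k * cos (INR k * w)))).
  apply (is_derive_ext (fun x => sum1 (fun k => G k x) n)). intros; reflexivity.
  apply (sum1_der G G').
  intros k x. unfold G, G'. auto_derive; auto. ring.
Qed.

Lemma dusum_cont lam n f w : continuous (dusum lam n f) w.
Proof.
  unfold dusum.
  set (G' := fun k w => lam n k * (fourier_a f k * (- (INR k * sin (INR k * w)))
                            + fourier_b f k * (INR k * cos (INR k * w)))).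
  apply (continuous_ext (fun x => sum1 (fun k => G' k x) n)). intros; reflexivity.
  apply (sum1_cont G').
  intros k x. apply cont_ex. unfold G'. auto_derive. auto.
Qed.

Lemma usum_cont lam n f w : continuous (usum lam n f) w.
Proof. apply cont_ex. eexists. apply usum_der. Qed.

Lemma trig_shift k x : cos (INR k * (x + 2 * PI)) = cos (INR k * x) /\ sin (INR k * (x + 2 * PI)) = sin (INR k * x).
Proof.
  replace (INR k * (x + 2 * PI)) with (INR k * x + 2 * INR k * PI) by ring.
  split. apply cos_period. apply sin_period.
Qed.

Lemma usum_shift lam n f x : usum lam n f (x + 2 * PI) = usum lam n f x.
Proof.
  unfold usum. f_equal. apply sum1_ext. intros k. destruct (trig_shift k x) as [H1 H2].
  rewrite H1, H2. auto.
Qed.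

Lemma dusum_shift lam n f x : dusum lam n f (x + 2 * PI) = dusum lam n f x.
Proof.
  unfold dusum. apply sum1_ext. intros k. destruct (trig_shift k x) as [H1 H2].
  rewrite H1, H2. auto.
Qed.

Lemma exRInt_cont (f : R -> R) a b : (forall z, continuous f z) -> ex_RInt f a b.
Proof. intros H. apply (ex_RInt_continuous (V:=R_CompleteNormedModule)). intros; auto. Qed.

Lemma ibp (F F' g g' : R -> R) a b :
  (forall x, is_derive F x (F' x)) -> (forall x, continuous F' x) ->
  (forall x, is_derive g x (g' x)) -> (forall x, continuous g' x) ->
  RInt (fun t => F' t * g t) a b = F b * g b - F a * g a - RInt (fun t => F t * g' t) a b.
Proof.
  intros HF HF' Hg Hg'.
  assert (Hc : forall x, continuous F x) by (intros; apply cont_ex; eexists; eauto).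
  assert (Hgc : forall x, continuous g x) by (intros; apply cont_ex; eexists; eauto).
  assert (H1 : ex_RInt (fun t => F' t * g t) a b).
  { apply exRInt_cont. intros; apply cont_mult; auto. }
  assert (H2 : ex_RInt (fun t => F t * g' t) a b).
  { apply exRInt_cont. intros; apply cont_mult; auto. }
  assert (H3 := is_RInt_plus _ _ _ _ _ _ (RInt_correct _ _ _ H1) (RInt_correct _ _ _ H2)).
  assert (H4 : is_RInt (fun t => F' t * g t + F t * g' t) a b (minus (F b * g b) (F a * g a))).
  { apply (is_RInt_derive (fun t => F t * g t)).
    - intros x _. apply (is_derive_mult F g x); auto. intros; apply Rmult_comm.
    - intros x _. apply cont_plus; apply cont_mult; auto. }
  assert (H5 := is_RInt_unique _ _ _ _ H3).
  assert (H6 := is_RInt_unique _ _ _ _ H4).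
  unfold plus, minus, opp in *; simpl in *.
  assert (E : (fun y : R => F' y * g y + F y * g' y) = (fun t => F' t * g t + F t * g' t)) by reflexivity.
  rewrite H6 in H5. unfold plus in H5; simpl in H5. lra.
Qed.

Lemma RInt_scal_R (f : R -> R) (c a b : R) : ex_RInt f a b ->
  RInt (fun t => c * f t) a b = c * RInt f a b.
Proof. intros H. apply (RInt_scal (V:=R_CompleteNormedModule) f a b c H). Qed.

Section Fourier.
Variable M : R -> R.
Hypothesis HM : forall x, is_derive M x (Derive M x).
Hypothesis HMc : forall x, continuous (Derive M) x.
Hypothesis HMpi : M PI = 0.
Hypothesis HMmpi : M (- PI) = 0.

Lemma Mcont x : continuous M x.
Proof. apply cont_ex. eexists; eauto. Qed.

Lemma fa_der k : fourier_a (Derive M) k = INR k * fourier_b M k.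
Proof.
  unfold fourier_a, fourier_b.
  rewrite (ibp M (Derive M) (fun t => cos (INR k * t)) (fun t => - (INR k * sin (INR k * t)))); auto.
  - rewrite HMpi, HMmpi.
    rewrite (RInt_ext (V:=R_CompleteNormedModule) (fun t => M t * - (INR k * sin (INR k * t))) (fun t => (- INR k) * (M t * sin (INR k * t))) (- PI) PI) by (intros; simpl; ring).
    rewrite RInt_scal_R. ring.
    apply exRInt_cont. intros; apply cont_mult. apply Mcont. apply cont_ex; auto_derive; auto.
  - intros x. auto_derive; auto. ring.
  - intros x. apply cont_ex; auto_derive; auto.
Qed.

Lemma fb_der k : fourier_b (Derive M) k = - INR k * fourier_a M k.
Proof.
  unfold fourier_a, fourier_b.
  rewrite (ibp M (Derive M) (fun t => sin (INR k * t)) (fun t => INR k * cos (INR k * t))); auto.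
  - rewrite HMpi, HMmpi.
    rewrite (RInt_ext (V:=R_CompleteNormedModule) (fun t => M t * (INR k * cos (INR k * t))) (fun t => (INR k) * (M t * cos (INR k * t))) (- PI) PI) by (intros; simpl; ring).
    rewrite RInt_scal_R. ring.
    apply exRInt_cont. intros; apply cont_mult. apply Mcont. apply cont_ex; auto_derive; auto.
  - intros x. auto_derive; auto. ring.
  - intros x. apply cont_ex; auto_derive; auto.
Qed.

Lemma usum_Derive lam n w : usum lam n (Derive M) w = dusum lam n M w.
Proof.
  unfold usum, dusum. rewrite fa_der. simpl INR. rewrite Rmult_0_l.
  replace (0 / 2) with 0 by field. rewrite Rplus_0_l.
  apply sum1_ext. intros k. rewrite fa_der, fb_der. ring.
Qed.
End Fourier.

Lemma supnorm_ge (F : R -> R) a b x : (forall y, continuous F y) -> a <= x <= b ->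
  Rabs (F x) <= supnorm a b F.
Proof.
  intros Hc Hx.
  destruct (continuity_ab_maj (fun y => Rabs (F y)) a b) as [Mx [HM HMx]]. lra.
  { intros c _. apply continuity_pt_filterlim. apply continuous_Rabs_comp. apply Hc. }
  unfold supnorm.
  destruct (Lub_Rbar_correct (fun y => exists x, a <= x <= b /\ y = Rabs (F x))) as [Hub Hl].
  set (l := Lub_Rbar _) in *.
  assert (H1 : Rbar_le (Rabs (F x)) l) by (apply Hub; exists x; auto).
  assert (H2 : Rbar_le l (Rabs (F Mx))).
  { apply Hl. intros y [z [Hz ->]]. simpl. apply HM; auto. }
  destruct l as [r| |]; simpl in *; try tauto.
Qed.

Lemma supnorm_nonneg (F : R -> R) a b : (forall y, continuous F y) -> a <= b -> 0 <= supnorm a b F.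
Proof.
  intros Hc Hab. eapply Rle_trans. apply Rabs_pos. apply (supnorm_ge F a b a); auto. lra.
Qed.

Section Final.
Variables (theta : R -> R) (w0 : R) (lam : nat -> nat -> R) (nl : nat -> nat).
Hypothesis theta_odd : forall x, theta (- x) = - theta x.
Hypothesis theta_d1 : forall x, ex_derive theta x.
Hypothesis theta_d2 : forall x, ex_derive (Derive theta) x.
Hypothesis theta_const : forall x, PI / 3 < x -> theta x = PI / 4.
Hypothesis w0_range : PI / 3 <= w0 < PI / 2.
Variable T : R.
Hypothesis HT0 : 0 <= T.
Hypothesis HT : forall x, Rabs (Derive theta x) <= T.
Variable c : R.
Hypothesis Hc : 0 < c.

Let G := 2 * (T * cc w0).
Let kap := (1 + G) / c.
Let B := G + kap.

Lemma G_nonneg : 0 <= G.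
Proof. unfold G. assert (H := cc_pos w0 w0_range). nra. Qed.

Lemma kap_nonneg : 0 <= kap.
Proof. unfold kap. assert (H := G_nonneg). apply Rdiv_le_0_compat; lra. Qed.

Section L.
Variable l : nat.
Hypothesis Hl : (1 <= l)%nat.
Hypothesis Hu0 : c <= Rabs (u_l theta w0 lam nl l 0).
Hypothesis Hmu : mu theta w0 lam nl l <= 1.

Let M := mMl theta w0 l.
Let U := u_l theta w0 lam nl l.
Let dU := dusum lam (nl l) M.
Let c0 := U 0.

Lemma MC1 x : is_derive M x (Derive M x) /\ continuous (Derive M) x.
Proof. apply (M_C1 theta w0 theta_odd theta_d1 theta_d2 theta_const w0_range T HT). Qed.

Lemma Mc x : continuous M x.
Proof. apply cont_ex. eexists. apply MC1. Qed.

Lemma U_der x : is_derive U x (dU x).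
Proof. apply usum_der. Qed.

Lemma alpha_bound x : Rabs (U x - M x) <= alpha theta w0 lam nl l.
Proof.
  rewrite (per_red (fun x => U x - M x)).
  - apply (supnorm_ge (fun x => U x - M x)).
    + intros y. apply cont_minus. apply usum_cont. apply Mc.
    + assert (H := red_range x). lra.
  - intros y. unfold U, u_l. rewrite usum_shift. unfold M. rewrite M_shift. auto.
Qed.

Lemma gamma_bound x : Rabs (dU x - Derive M x) <= gamma theta w0 lam nl l.
Proof.
  assert (Hud : forall w, u1_l theta w0 lam nl l w = dU w).
  { intros w. unfold u1_l, dU. apply usum_Derive.
    apply MC1. apply MC1.
    apply (M_PI theta w0 theta_odd theta_d1 theta_const w0_range).
    apply (M_mPI theta w0 theta_odd theta_d1 theta_const w0_range). }
  rewrite (per_red (fun x => dU x - Derive M x)).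
  - unfold gamma.
    rewrite <- (Hud (red2pi x)).
    apply (supnorm_ge (fun w => u1_l theta w0 lam nl l w - Derive (mMl theta w0 l) w)).
    + intros y. apply cont_minus. apply usum_cont. apply MC1.
    + assert (H := red_range x). lra.
  - intros y. unfold dU. rewrite dusum_shift. unfold M.
    rewrite (DM_shift theta w0 theta_odd theta_d1 theta_d2 theta_const w0_range T HT). auto.
Qed.

Lemma alpha_nonneg : 0 <= alpha theta w0 lam nl l.
Proof. eapply Rle_trans. apply Rabs_pos. apply (alpha_bound 0). Qed.
Lemma gamma_nonneg : 0 <= gamma theta w0 lam nl l.
Proof. eapply Rle_trans. apply Rabs_pos. apply (gamma_bound 0). Qed.

Lemma c0_nz : c0 <> 0.
Proof. intros H. unfold c0 in H. unfold U in H. rewrite H, Rabs_R0 in Hu0. lra. Qed.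

Let f := m_l theta w0 lam nl l.
Let f' := fun y => (dhh l y * U y + hh l y * dU y) / c0.
Let g := mM theta w0.
Let g' := Derive g.

Lemma f_eq y : f y = hh l y * U y / c0.
Proof. reflexivity. Qed.

Lemma f_der x : is_derive f x (f' x).
Proof.
  unfold f'. apply (is_derive_ext (fun y => hh l y * U y * / c0)).
  intros t. reflexivity.
  unfold Rdiv.
  replace ((dhh l x * U x + hh l x * dU x) * / c0) with
    ((dhh l x * U x + hh l x * dU x) * / c0 + hh l x * U x * 0) by ring.
  apply (is_derive_mult (fun y => hh l y * U y) (fun _ => / c0)).
  apply (is_derive_mult (hh l) U). apply hh_der. apply U_der. intros; apply Rmult_comm.
  apply is_derive_cst. intros; apply Rmult_comm.
Qed.

Lemma f'_cont x : continuous f' x.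
Proof.
  unfold f'. apply (cont_mult _ (fun _ => / c0)). 2: apply cont_const.
  apply cont_plus; apply cont_mult.
  apply dhh_cont. apply usum_cont. apply hh_cont. apply dusum_cont.
Qed.

Lemma gC1 x : is_derive g x (g' x) /\ continuous g' x /\ Rabs (g' x) <= G.
Proof. apply (mM_C1 theta w0 theta_odd theta_d1 theta_d2 theta_const w0_range T HT). Qed.

Lemma g'_eq x : g' x = dhh l x * M x + hh l x * Derive M x.
Proof.
  apply is_derive_unique.
  apply (is_derive_ext (fun y => hh l y * M y)).
  intros t. symmetry. apply (mM_hM theta w0 theta_odd theta_d1 theta_const w0_range).
  apply (is_derive_mult (hh l) M). apply hh_der. apply MC1. intros; apply Rmult_comm.
Qed.

Lemma fg_bound x : Rabs (f' x - g' x) <= kap * mu theta w0 lam nl l.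
Proof.
  set (al := alpha theta w0 lam nl l). set (ga := gamma theta w0 lam nl l).
  assert (Hal := alpha_nonneg). assert (Hga := gamma_nonneg). fold al ga in Hal, Hga.
  assert (H0 : Rabs (1 - c0) <= al).
  { replace (1 - c0) with (- (U 0 - M 0)).
    rewrite Rabs_Ropp. apply alpha_bound.
    unfold M. rewrite (M_0 theta w0 theta_odd theta_d1 theta_const w0_range). unfold c0. ring. }
  assert (Hc0 := c0_nz).
  assert (Hc0' : c <= Rabs c0) by auto.
  replace (f' x - g' x) with ((dhh l x * (U x - M x) + hh l x * (dU x - Derive M x) + g' x * (1 - c0)) / c0).
  2:{ unfold f'. rewrite g'_eq. field. auto. }
  unfold Rdiv. rewrite Rabs_mult, Rabs_inv.
  assert (A1 : Rabs (dhh l x * (U x - M x)) <= INR l * al).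
  { rewrite Rabs_mult. apply Rmult_le_compat; auto using Rabs_pos. apply dhh_bound. apply alpha_bound. }
  assert (A2 : Rabs (hh l x * (dU x - Derive M x)) <= 1 * ga).
  { rewrite Rabs_mult. apply Rmult_le_compat; auto using Rabs_pos. apply hh_bound. apply gamma_bound. }
  assert (A3 : Rabs (g' x * (1 - c0)) <= G * al).
  { rewrite Rabs_mult. apply Rmult_le_compat; auto using Rabs_pos. apply gC1. }
  assert (Hl1 : 1 <= INR l) by (apply (le_INR 1); auto).
  assert (A4 : Rabs (dhh l x * (U x - M x) + hh l x * (dU x - Derive M x) + g' x * (1 - c0))
              <= (1 + G) * mu theta w0 lam nl l).
  { eapply Rle_trans. apply Rabs_triang. eapply Rle_trans. apply Rplus_le_compat_r. apply Rabs_triang.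
    unfold mu. fold al ga. assert (HG := G_nonneg).
    assert (al <= INR l * al) by nra.
    assert (G * al <= G * (INR l * al)) by (apply Rmult_le_compat_l; auto).
    nra. }
  assert (Hcpos : 0 < Rabs c0) by lra.
  assert (A5 : / Rabs c0 <= / c) by (apply Rinv_le_contravar; auto).
  unfold kap. unfold Rdiv.
  assert (0 <= (1 + G) * mu theta w0 lam nl l).
  { assert (HG := G_nonneg). unfold mu. fold al ga. apply Rmult_le_pos. lra.
    apply Rplus_le_le_0_compat; auto. apply Rmult_le_pos; auto. apply pos_INR. }
  replace ((1 + G) * / c * mu theta w0 lam nl l) with ((1 + G) * mu theta w0 lam nl l * / c) by ring.
  apply Rmult_le_compat; auto using Rabs_pos. left; apply Rinv_0_lt_compat; auto.
Qed.

Lemma mu_nonneg : 0 <= mu theta w0 lam nl l.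
Proof.
  unfold mu. assert (H1 := alpha_nonneg). assert (H2 := gamma_nonneg).
  assert (H3 := pos_INR l). assert (0 <= INR l * alpha theta w0 lam nl l) by nra. lra.
Qed.

Lemma f'_bound x : Rabs (f' x) <= B.
Proof.
  replace (f' x) with (g' x + (f' x - g' x)) by ring.
  eapply Rle_trans. apply Rabs_triang. unfold B. apply Rplus_le_compat.
  apply gC1. eapply Rle_trans. apply fg_bound.
  assert (H := kap_nonneg). assert (H2 := mu_nonneg). nra.
Qed.

Lemma f_0 : f 0 = 1.
Proof.
  rewrite f_eq. unfold hh. replace (0 / 2) with 0 by field. rewrite cos_0, pow1.
  fold c0. field. apply c0_nz.
Qed.

Variables a b : R.
Let R0 := Rmax (Rabs a) (Rabs b) + 1.

Lemma bound_l w : a <= w <= b ->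
  Rabs (Derive (phi_l theta w0 lam nl l) w - Derive (phiM theta w0) w)
  <= exp (B * R0) * (kap * (G * R0 + exp (B * R0) * R0 * B + 1)) * mu theta w0 lam nl l.
Proof.
  intros Hw.
  assert (HwR : Rabs w < R0).
  { unfold R0. assert (Rabs a <= Rmax (Rabs a) (Rabs b)) by apply Rmax_l.
    assert (Rabs b <= Rmax (Rabs a) (Rabs b)) by apply Rmax_r.
    unfold Rabs in *. destruct (Rcase_abs w), (Rcase_abs a), (Rcase_abs b); lra. }
  assert (HG := G_nonneg). assert (Hk := kap_nonneg). assert (Hm := mu_nonneg).
  assert (Hw0 : 0 < 2 * w0) by (assert (H := PI_gt3); lra).
  assert (H := prod_deriv f f' g g' B G (kap * mu theta w0 lam nl l) (phiM theta w0) (2 * w0) R0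
    f_der f'_cont f'_bound f_0 (fun x => proj1 (gC1 x))
    (mM_bound theta w0 theta_odd theta_d1 theta_const w0_range)
    (fun x => proj2 (proj2 (gC1 x)))
    (mM_0 theta w0 theta_odd theta_d1 theta_const w0_range)
    fg_bound ltac:(unfold B; lra) HG ltac:(apply Rmult_le_pos; auto) Hw0
    (phiM_1 theta w0 theta_odd theta_d1 theta_const w0_range)
    (refine theta w0 theta_odd theta_d1 theta_const w0_range) w HwR).
  unfold phi_l. eapply Rle_trans. exact H. right. ring.
Qed.
End L.
End Final.

Theorem lemma8
  (theta : R -> R) (w0 : R) (lam : nat -> nat -> R) (nl : nat -> nat)
  (l0 : nat)
  (theta_odd : forall x, theta (- x) = - theta x)
  (theta_mono : forall x y, x <= y -> theta x <= theta y)
  (theta_d1 : forall x, ex_derive theta x)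
  (theta_d2 : forall x, ex_derive (Derive theta) x)
  (theta_C2 : forall x, continuous (Derive (Derive theta)) x)
  (theta_const : forall x, PI / 3 < x -> theta x = PI / 4)
  (w0_range : PI / 3 <= w0 < PI / 2)
  (H_alpha : is_lim_seq (fun l => INR l * alpha theta w0 lam nl l) 0)
  (H_gamma : is_lim_seq (gamma theta w0 lam nl) 0)
  (H_upi : forall l, u_l theta w0 lam nl l PI <> 0)
  (H_l0 : exists c, 0 < c /\
            forall l, (l0 <= l)%nat -> c <= Rabs (u_l theta w0 lam nl l 0)) :
  forall a b, a < b ->
  exists C, exists L, forall l, (l0 <= l)%nat -> (L <= l)%nat ->
    forall w, a <= w <= b ->
      Rabs (Derive (phi_l theta w0 lam nl l) w - Derive (phiM theta w0) w)
        <= C * mu theta w0 lam nl l.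
Proof.
  intros a b Hab.
  destruct (th'_bound theta theta_odd theta_d1 theta_d2 theta_const) as [T [HT0 HT]].
  destruct H_l0 as [c [Hc Hcl]].
  apply is_lim_seq_spec in H_alpha. apply is_lim_seq_spec in H_gamma.
  destruct (H_alpha (mkposreal (1/2) ltac:(lra))) as [L1 HL1].
  destruct (H_gamma (mkposreal (1/2) ltac:(lra))) as [L2 HL2].
  eexists. exists (max (max L1 L2) 1). intros l Hl0 HL w Hw.
  eapply (bound_l theta w0 lam nl theta_odd theta_d1 theta_d2 theta_const w0_range T HT0 HT c Hc l).
  - lia.
  - apply Hcl; auto.
  - assert (A1 := HL1 l ltac:(lia)). assert (A2 := HL2 l ltac:(lia)). simpl in A1, A2.
    rewrite Rminus_0_r in A1, A2. unfold mu.
    apply Rabs_def2 in A1. apply Rabs_def2 in A2. lra.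
  - exact Hw.
Qed.
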